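(* Let $n$ be a positive odd integer and let $x\in\mathbb{Z}$ with $\gcd(x(1-x),n)=1$. Then $$(-1)^{|\{1\le k<n/2:\ \{kx\}_n>k\}|}=\left(\frac{2x(1-x)}{n}\right),$$ $$(-1)^{|\{1\le k<n/2:\ \{kx\}_n>n/2\ \&\ \{k(1-x)\}_n>n/2\}|}=\left(\frac{2}{n}\right),$$ $$(-1)^{|\{1\le k<n/2:\ \{kx\}_n<n/2\ \&\ \{k(1-x)\}_n<n/2\}|}=\left(\frac{2x(x-1)}{n}\right),$$ and $$(-1)^{|\{1\le k<n/2:\ \{kx\}_n>n/2>\{k(1-x)\}_n\}|}=\left(\frac{2x}{n}\right).$$
   Context: For a positive integer $n$ and an integer $y$, $\{y\}_n$ denotes the unique integer $r\in\{0,1,\dots,n-1\}$ with $r\equiv y\pmod n$. $\left(\frac{\cdot}{n}\right)$ denotes the Jacobi symbol. *)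

(* Defs.v *)
From HB Require Import structures.
From mathcomp Require Import all_boot all_order all_algebra.
Set Implicit Arguments. Unset Strict Implicit. Unset Printing Implicit Defensive.
Import Order.TTheory GRing.Theory Num.Theory.
Local Open Scope ring_scope.

Definition lres (y : int) (n : nat) : int := (y %% n%:Z)%Z.

Definition legendre (a : int) (p : nat) : int :=
  if (p%:Z %| a)%Z then 0
  else if [exists y : 'I_p, (p%:Z %| (y%:Z ^+ 2 - a))%Z] then 1 else -1.

Definition jacobi (a : int) (n : nat) : int :=
  \prod_(p <- primes n) legendre a p ^+ logn p n.

Definition cnt (n : nat) (P : nat -> bool) : nat :=
  count (fun k => (2 * k < n)%N && P k) (iota 1 n.-1).

(* Main.v *)
Require Import Defs.
From HB Require Import structures.
From mathcomp Require Import all_boot all_order all_algebra.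
From mathcomp Require Import finfield.
From mathcomp Require Import zify ring lra.
Import Order.TTheory GRing.Theory Num.Theory.
Local Open Scope ring_scope.
Set Implicit Arguments. Unset Strict Implicit.
Lemma jacobiE a n N : (0 < n)%N -> (n < N)%N ->
  jacobi a n = \prod_(q <- index_iota 0 N | prime q) legendre a q ^+ logn q n.
Proof.
move=> n0 nN; rewrite /jacobi -(filter_pi_of nN) big_filter.
rewrite big_mkcond [RHS]big_mkcond; apply: eq_bigr => q _ /=.
rewrite /pi_of /= mem_primes n0 /=.
case: (boolP (prime q)) => //= pq; case: (boolP (q %| n)%N) => // qn.
have -> : logn q n = 0%N by apply/eqP; rewrite -leqn0 leqNgt logn_gt0 mem_primes pq n0.
by rewrite expr0.
Qed.

Lemma jacobiM a m n : (0 < m)%N -> (0 < n)%N ->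
  jacobi a (m * n) = jacobi a m * jacobi a n.
Proof.
move=> m0 n0; have mn0 : (0 < m * n)%N by rewrite muln_gt0 m0.
rewrite !(@jacobiE a _ (m * n).+1) //; last first.
- by rewrite ltnS leq_pmulr.
- by rewrite ltnS leq_pmull.
rewrite -big_split /=; apply: eq_bigr => q pq.
by rewrite lognM // exprD.
Qed.
Lemma odd_neq2 (n : nat) (z : int) : odd n -> n%:Z != 2 * z.
Proof.
move=> on; apply/eqP => E.
have z0 : 0 <= z by lia.
have [m Em] : exists m : nat, z = m%:Z by exists `|z|%N; rewrite gez0_abs.
move: E; rewrite {}Em -PoszM => /eqP; rewrite eqz_nat => /eqP E.
by move: on; rewrite E oddM.
Qed.

Definition up (n : nat) (t : int) : bool := (n%:Z < 2 * (t %% n%:Z)%Z).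

Lemma res_bounds (n : nat) (t : int) : (0 < n)%N -> 0 <= (t %% n%:Z)%Z < n%:Z.
Proof. move=> n0; rewrite modz_ge0 ?ltz_pmod //; lia. Qed.

Lemma up_opp n t : odd n -> (t %% n%:Z)%Z != 0 -> up n (- t) = ~~ up n t.
Proof.
move=> on r0; have n0 : (0 < n)%N by rewrite lt0n; apply/eqP => n0; rewrite n0 in on.
have [rl rh] := andP (res_bounds t n0).
have E : ((- t) %% n%:Z)%Z = n%:Z - (t %% n%:Z)%Z.
  rewrite -modzNm -(modzDl _ n%:Z) modz_small //.
  have : (t %% n%:Z)%Z != 0 := r0. lia.
rewrite /up E; have := @odd_neq2 n (t %% n%:Z)%Z on.
have : (t %% n%:Z)%Z != 0 := r0. lia.
Qed.

Lemma odd_gt0 n : odd n -> (0 < n)%N.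
Proof. by case: n. Qed.

Lemma n_half (n : nat) : odd n -> n%:Z = 2 * (n./2)%:Z + 1.
Proof. move=> on; have := odd_double_half n; rewrite on -muln2; lia. Qed.

Lemma dvd_small (n : nat) (z : int) : (n%:Z %| z)%Z -> - n%:Z < z < n%:Z -> z = 0.
Proof.
move=> /dvdzP [q ->] /andP [h1 h2].
have [q0|q0|->] := ltrgtP q 0; last by rewrite mul0r.
- have q1 : q <= -1 by lia.
  nia.
- have q1 : 1 <= q by lia.
  nia.
Qed.

Lemma res_nz (n : nat) (a z : int) : coprimez a n -> 0 < z < n%:Z ->
  ((z * a) %% n%:Z)%Z != 0.
Proof.
move=> cop /andP [z0 zn]; apply/negP => /eqP /dvdz_mod0P.
rewrite Gauss_dvdzl; last by rewrite coprimez_sym.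
move=> /dvd_small; lia.
Qed.

Definition rho (n : nat) (a : int) (k : nat) : int :=
  if up n (k%:Z * a) then n%:Z - ((k%:Z * a) %% n%:Z)%Z else ((k%:Z * a) %% n%:Z)%Z.

Lemma rho_bounds n a k : odd n -> coprimez a n -> (0 < k)%N -> (2 * k < n)%N ->
  1 <= rho n a k /\ 2 * rho n a k < n%:Z.
Proof.
move=> on cop k0 kn; have n0 := @odd_gt0 n on.
have [rl rh] := andP (res_bounds (k%:Z * a) n0).
have nz := @res_nz n a k%:Z cop.
have : 0 < k%:Z < n%:Z by lia.
move=> /nz {}nz; have hn := @odd_neq2 n ((k%:Z * a) %% n%:Z)%Z on.
rewrite /rho /up; case: ifP; lia.
Qed.

Lemma rho_cong n a k : odd n ->
  ((k%:Z * a) %% n%:Z)%Z = (((-1) ^+ up n (k%:Z * a) * rho n a k) %% n%:Z)%Z.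
Proof.
move=> on; rewrite /rho; set u := ((k%:Z * a) %% n%:Z)%Z; case: ifP => _.
  rewrite expr1 mulN1r opprB (_ : u - n%:Z = (-1) * n%:Z + u); last by ring.
  by rewrite modzMDl /u modz_mod.
by rewrite expr0 mul1r modz_mod.
Qed.

Lemma rho_inj n a k j : odd n -> coprimez a n -> (0 < k)%N -> (2 * k < n)%N ->
  (0 < j)%N -> (2 * j < n)%N -> rho n a k = rho n a j -> k = j.
Proof.
move=> on cop k0 kn j0 jn.
have cop' : coprimez n a by rewrite coprimez_sym.
have same : ((k%:Z * a) %% n%:Z)%Z = ((j%:Z * a) %% n%:Z)%Z -> k = j.
  move=> /eqP; rewrite eqz_mod_dvd -mulrBl Gauss_dvdzl // => /dvd_small H.
  apply/eqP; rewrite -eqz_nat; apply/eqP; have : k%:Z - j%:Z = 0 by apply: H; lia.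
  lia.
have diff : ((k%:Z * a) %% n%:Z)%Z + ((j%:Z * a) %% n%:Z)%Z = n%:Z -> k = j.
  move=> E; have : ((k%:Z * a + j%:Z * a) %% n%:Z)%Z = 0.
    by rewrite -modzDm E modzz.
  move=> /dvdz_mod0P; rewrite -mulrDl Gauss_dvdzl // => /dvd_small H.
  have : k%:Z + j%:Z = 0 by apply: H; lia.
  lia.
rewrite /rho; case: ifP => _; case: ifP => _ E.
- by apply: same; lia.
- by apply: diff; lia.
- by apply: diff; lia.
- exact: same.
Qed.

Lemma rho_perm n a : odd n -> coprimez a n ->
  perm_eq (map (rho n a) (iota 1 n./2)) (map Posz (iota 1 n./2)).
Proof.
move=> on cop.
have nh := n_half on.
have mem k : (k \in iota 1 n./2) = (0 < k)%N && (2 * k < n)%N.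
  rewrite mem_iota; apply/idP/idP; lia.
have U1 : uniq (map (rho n a) (iota 1 n./2)).
  rewrite map_inj_in_uniq ?iota_uniq // => k j; rewrite !mem => /andP [? ?] /andP [? ?].
  exact: rho_inj.
have S : {subset map (rho n a) (iota 1 n./2) <= map Posz (iota 1 n./2)}.
  move=> z /mapP [k]; rewrite mem => /andP [k0 kn] ->.
  have [r1 r2] := rho_bounds on cop k0 kn.
  apply/mapP; exists `|rho n a k|%N; last by rewrite gez0_abs //; lia.
  rewrite mem_iota; lia.
have SZ : (size (map Posz (iota 1 n./2)) <= size (map (rho n a) (iota 1 n./2)))%N.
  by rewrite !size_map.
have [_ E] := uniq_min_size U1 S SZ.
apply: uniq_perm => //; rewrite map_inj_uniq ?iota_uniq //.
by move=> x y [].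
Qed.

Definition G (n : nat) (a : int) : nat :=
  count (fun k : nat => up n (k%:Z * a)) (iota 1 n./2).

Lemma odd_count_addb (T : Type) (p q : pred T) s :
  odd (count (fun x => p x (+) q x) s) = odd (count p s) (+) odd (count q s).
Proof.
elim: s => //= x s IH; rewrite !oddD IH.
by case: (p x); case: (q x); case: (odd (count p s)); case: (odd (count q s)).
Qed.

Lemma up_mod n t s : (t %% n%:Z)%Z = (s %% n%:Z)%Z -> up n t = up n s.
Proof. by rewrite /up => ->. Qed.

Lemma in_half n k : odd n -> (k \in iota 1 n./2) = (0 < k)%N && (2 * k < n)%N.
Proof. move=> on; have := n_half on; rewrite mem_iota; move=> nh; apply/idP/idP; lia. Qed.

Lemma up_step n a b k : odd n -> coprimez a n -> coprimez b n ->
  (0 < k)%N -> (2 * k < n)%N ->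
  up n (k%:Z * (a * b)) = up n (k%:Z * a) (+) up n (rho n a k * b).
Proof.
move=> on ca cb k0 kn.
have [r1 r2] := rho_bounds on ca k0 kn.
have E : ((k%:Z * (a * b)) %% n%:Z)%Z = ((((-1) ^+ up n (k%:Z * a)) * rho n a k * b) %% n%:Z)%Z.
  by rewrite mulrA -modzMml (rho_cong _ _ on) modzMml.
rewrite (up_mod E); case: (up n (k%:Z * a)).
  rewrite expr1 mulN1r mulNr up_opp // res_nz //; lia.
by rewrite expr0 mul1r.
Qed.

Lemma G_mul n a b : odd n -> coprimez a n -> coprimez b n ->
  odd (G n (a * b)) = odd (G n a) (+) odd (G n b).
Proof.
move=> on ca cb; rewrite /G.
rewrite (@eq_in_count _ _ (fun k : nat => up n (k%:Z * a) (+) up n (rho n a k * b))); last first.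
  by move=> k; rewrite in_half // => /andP [k0 kn]; apply: up_step.
rewrite odd_count_addb; congr (_ (+) odd _).
rewrite -(count_map (rho n a) (fun z => up n (z * b))).
rewrite (permP (rho_perm on ca)) count_map //.
Qed.

Lemma Posz_sum (I : Type) (s : seq I) (F : I -> nat) :
  (\sum_(i <- s) F i)%N%:Z = \sum_(i <- s) (F i)%:Z.
Proof. by elim: s => [|x s IH]; rewrite ?big_nil ?big_cons // PoszD IH. Qed.

Lemma count_sum (I : Type) (s : seq I) (p : pred I) :
  count p s = (\sum_(i <- s) p i)%N.
Proof. by elim: s => [|x s IH]; rewrite ?big_nil ?big_cons //= IH. Qed.

Definition T (n : nat) : nat := (\sum_(k <- iota 1 n./2) k)%N.

Lemma G_sum n a : odd n -> coprimez a n -> exists W : int,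
  \sum_(k <- iota 1 n./2) ((k%:Z * a) %% n%:Z)%Z + (G n a)%:Z = (T n)%:Z + 2 * W.
Proof.
move=> on ca; have nh := n_half on.
pose w k : int := if up n (k%:Z * a) then (n./2)%:Z + 1 - rho n a k else 0.
exists (\sum_(k <- iota 1 n./2) w k).
rewrite /G count_sum Posz_sum -big_split /=.
rewrite (eq_big_seq (fun k => rho n a k + 2 * w k)); last first.
  move=> k; rewrite in_half // => /andP [k0 kn].
  rewrite /w /rho; case: (up n (k%:Z * a)) => /=; lia.
rewrite big_split /= -mulr_sumr; congr (_ + _).
rewrite -(big_map (rho n a) xpredT id) (perm_big _ (rho_perm on ca)).
by rewrite big_map /T Posz_sum.
Qed.

Lemma even_nat (N : nat) (W : int) : N%:Z = 2 * W -> ~~ odd N.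
Proof.
move=> E; apply/negP => oN; have := @odd_neq2 N W oN; by rewrite E eqxx.
Qed.

Lemma eisenstein n a : odd n -> odd a -> coprime a n ->
  odd (G n a%:Z) = odd (\sum_(k <- iota 1 n./2) (k * a %/ n))%N.
Proof.
move=> on oa ca; have n0 := odd_gt0 on.
have caz : coprimez a%:Z n by rewrite coprimezE.
have [W EW] := G_sum on caz.
set Q := (\sum_(k <- iota 1 n./2) (k * a %/ n))%N.
set R := (\sum_(k <- iota 1 n./2) (k * a %% n))%N.
have E1 : (a * T n = Q * n + R)%N.
  rewrite /T big_distrr /= /Q /R big_distrl /= -big_split /=.
  by apply: eq_bigr => k _; rewrite -divn_eq mulnC.
have E2 : \sum_(k <- iota 1 n./2) ((k%:Z * a%:Z) %% n%:Z)%Z = R%:Z.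
  by rewrite /R Posz_sum; apply: eq_bigr => k _; rewrite -PoszM modz_nat.
rewrite E2 in EW.
have ha := n_half oa; have hn := n_half on.
have : (Q + G n a)%N%:Z = 2 * ((a./2)%:Z * (T n)%:Z - (n./2)%:Z * Q%:Z - W + (G n a)%:Z).
  have E1' : a%:Z * (T n)%:Z = Q%:Z * n%:Z + R%:Z by rewrite -!PoszM -PoszD E1.
  rewrite ha hn in E1'; rewrite PoszD; nia.
move=> /even_nat; rewrite oddD.
by case: (odd Q); case: (odd (G n a)).
Qed.

Lemma count_le (H q : nat) : (q <= H)%N ->
  count (fun j => (j <= q)%N) (iota 1 H) = q.
Proof.
move=> qH; rewrite -(subnKC qH) iotaD count_cat.
rewrite (@eq_in_count _ _ predT); last first.
  by move=> j; rewrite mem_iota => /andP [_ ?] /=; lia.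
rewrite (@eq_in_count _ _ pred0 (iota (1 + q) _)); last first.
  by move=> j; rewrite mem_iota => /andP [? _] /=; lia.
by rewrite count_predT count_pred0 size_iota addn0.
Qed.

Lemma lattice n a : odd n -> odd a -> coprime a n ->
  (\sum_(k <- iota 1 n./2) (k * a %/ n) + \sum_(j <- iota 1 a./2) (j * n %/ a) = n./2 * a./2)%N.
Proof.
move=> on oa ca; have n0 := odd_gt0 on; have a0 := odd_gt0 oa.
have hn := n_half on; have ha := n_half oa.
have S1 : (\sum_(k <- iota 1 n./2) (k * a %/ n) =
   \sum_(k <- iota 1 n./2) \sum_(j <- iota 1 a./2) ((j * n <= k * a)%N : nat))%N.
  apply: eq_big_seq => k; rewrite in_half // => /andP [k0 kn].
  rewrite -count_sum -(@count_le a./2 (k * a %/ n)); last first.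
    rewrite -ltnS ltn_divLR //; nia.
  by apply: eq_count => j; rewrite leq_divRL.
have S2 : (\sum_(j <- iota 1 a./2) (j * n %/ a) =
   \sum_(j <- iota 1 a./2) \sum_(k <- iota 1 n./2) ((k * a <= j * n)%N : nat))%N.
  apply: eq_big_seq => j; rewrite in_half // => /andP [j0 ja].
  rewrite -count_sum -(@count_le n./2 (j * n %/ a)); last first.
    rewrite -ltnS ltn_divLR //; nia.
  by apply: eq_count => k; rewrite leq_divRL.
rewrite S1 S2 (exchange_big _ _ (iota 1 a./2)) -big_split /=.
have C (c : nat) (s : seq nat) : (\sum_(k <- s) c = size s * c)%N.
  by elim: s => [|x s IH]; rewrite ?big_nil ?big_cons // IH mulSn.
rewrite (_ : (n./2 * a./2 = \sum_(j <- iota 1 a./2) n./2)%N); last by rewrite C size_iota mulnC.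
apply: eq_big_seq => j; rewrite in_half // => /andP [j0 ja].
rewrite -{3}(size_iota 1 n./2) -sum1_size -big_split /=; apply: eq_big_seq => k; rewrite in_half // => /andP [k0 kn].
have ne : (j * n != k * a)%N.
  apply/eqP => E; have : (n %| k * a)%N by rewrite -E dvdn_mull.
  rewrite Gauss_dvdl; last by rewrite coprime_sym.
  move=> /dvdn_leq; lia.
move: ne; case: (leqP (j * n) (k * a)) => h1; case: (leqP (k * a) (j * n)) => h2 //=; lia.
Qed.

Lemma recip n a : odd n -> odd a -> coprime a n ->
  odd (G n a%:Z) (+) odd (G a n%:Z) = odd (n./2 * a./2).
Proof.
move=> on oa ca.
rewrite eisenstein // eisenstein //; last by rewrite coprime_sym.
by rewrite -oddD lattice.
Qed.

Lemma G_two n : odd n -> odd (G n 2) = odd (T n).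
Proof.
move=> on; have c2 : coprimez 2 n by rewrite coprimezE /= coprime2n.
have [W EW] := G_sum on c2.
have hn := n_half on.
have E : \sum_(k <- iota 1 n./2) ((k%:Z * 2) %% n%:Z)%Z = 2 * (T n)%:Z.
  rewrite /T Posz_sum mulr_sumr; apply: eq_big_seq => k; rewrite in_half // => /andP [k0 kn].
  rewrite modz_small; lia.
rewrite E in EW.
have : (G n 2 + T n)%N%:Z = 2 * W by rewrite PoszD; lia.
move=> /even_nat; rewrite oddD.
by case: (odd (G n 2)); case: (odd (T n)).
Qed.

Lemma G_m1 n : odd n -> G n (-1) = n./2.
Proof.
move=> on; have n0 := odd_gt0 on; have hn := n_half on.
rewrite /G -[X in _ = X](size_iota 1 n./2) -count_predT.
apply: eq_in_count => k; rewrite in_half // => /andP [k0 kn] /=.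
rewrite mulrN1 up_opp // ?modz_small /up ?modz_small; lia.
Qed.

Lemma G_per N a b : (a %% N%:Z)%Z = (b %% N%:Z)%Z -> G N a = G N b.
Proof.
move=> E; rewrite /G; apply: eq_count => k /=; apply: up_mod.
by rewrite -modzMmr E modzMmr.
Qed.

Lemma half_mul m n : odd m -> odd n ->
  odd (m * n)./2 = odd m./2 (+) odd n./2.
Proof.
move=> om on; have hm := n_half om; have hn := n_half on.
have omn : odd (m * n) by rewrite oddM om on.
have hmn := n_half omn.
have E : ((m * n)./2 = (m./2 * n./2).*2 + (m./2 + n./2))%N.
  apply/eqP; rewrite -eqz_nat; apply/eqP; rewrite PoszD -muln2 !PoszM.
  rewrite PoszM in hmn; rewrite hm hn in hmn; lia.
by rewrite E oddD odd_double oddD.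
Qed.

Lemma G_dmul m n a : odd m -> odd n -> coprimez a (m * n)%N ->
  odd (G (m * n) a) = odd (G m a) (+) odd (G n a).
Proof.
move=> om on ca.
have omn : odd (m * n) by rewrite oddM om on.
have mn0 := odd_gt0 omn.
set r := `|(a %% (m * n)%N%:Z)%Z|%N.
have er : r%:Z = (a %% (m * n)%N%:Z)%Z by rewrite gez0_abs // modz_ge0 //; lia.
pose b := if odd r then r else (r + m * n)%N.
have ob : odd b by rewrite /b; case: ifP => // /negbT; rewrite oddD omn => /negbTE ->.
have eb : (b%:Z %% (m * n)%N%:Z)%Z = (a %% (m * n)%N%:Z)%Z.
  rewrite /b; case: ifP => _; first by rewrite er modz_mod.
  by rewrite PoszD modzDr er modz_mod.
have ebN (N : nat) : (N %| m * n)%N -> (b%:Z %% N%:Z)%Z = (a %% N%:Z)%Z.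
  move=> dN; apply/eqP; rewrite eqz_mod_dvd; apply: (@dvdz_trans (m * n)%N%:Z).
    by [].
  by rewrite -eqz_mod_dvd eb.
have cbN (N : nat) : (N %| m * n)%N -> coprime b N.
  move=> dN; have : coprimez b%:Z N.
    rewrite /coprimez -gcdz_modl ebN // gcdz_modl.
    by apply: (coprimez_dvdr dN).
  by rewrite coprimezE.
have dm : (m %| m * n)%N by apply: dvdn_mulr.
have dn : (n %| m * n)%N by apply: dvdn_mull.
rewrite -(G_per (ebN _ (dvdnn _))) -(G_per (ebN _ dm)) -(G_per (ebN _ dn)).
have R N : (N %| m * n)%N -> odd N -> odd (G N b%:Z) = odd (G b N%:Z) (+) odd (N./2 * b./2).
  move=> dN oN; rewrite -(recip oN ob (cbN _ dN)).
  by case: (odd (G N b%:Z)); case: (odd (G b N%:Z)).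
rewrite !R //.
have cz N : (N %| m * n)%N -> coprimez N%:Z b by move=> dN; rewrite coprimezE /= coprime_sym cbN.
rewrite PoszM G_mul // ?cz //.
rewrite !oddM half_mul //.
by case: (odd (G b m)); case: (odd (G b n)); case: (odd m./2); case: (odd n./2); case: (odd b./2).
Qed.

Section Prime.
Variable p : nat.
Hypothesis pp : prime p.
Local Notation F := 'F_p.

Lemma Fp_eq0 (t : int) : (t%:~R == 0 :> F) = (p %| t)%Z.
Proof. by rewrite (dvdz_pcharf (pchar_Fp pp)). Qed.

Lemma Fp_modz (t : int) : ((t %% p%:Z)%Z%:~R : F) = t%:~R.
Proof.
apply/eqP; rewrite -subr_eq0 -rmorphB /= Fp_eq0 -eqz_mod_dvd.
by rewrite modz_mod.
Qed.

Lemma nat_intr (k : nat) : ((k%:Z)%:~R : F) = k%:R.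
Proof. by rewrite -pmulrn. Qed.

Lemma prod_const (I : Type) (s : seq I) (c : F) : \prod_(i <- s) c = c ^+ size s.
Proof. by elim: s => [|x s IH]; rewrite ?big_nil ?big_cons ?expr0 // IH exprS. Qed.

Lemma prod_sign (I : Type) (s : seq I) (P : pred I) :
  \prod_(i <- s) ((-1) ^+ P i : F) = (-1) ^+ count P s.
Proof. by elim: s => [|x s IH]; rewrite ?big_nil ?big_cons ?expr0 //= IH exprD. Qed.

Lemma gauss_Fp (a : int) : odd p -> coprimez a p ->
  (a%:~R : F) ^+ p./2 = (-1) ^+ G p a.
Proof.
move=> op ca; have hp := n_half op.
set s := iota 1 p./2.
have P0 : \prod_(k <- s) ((k%:Z)%:~R : F) != 0.
  rewrite prodf_seq_neq0; apply/allP => k; rewrite in_half // => /andP [k0 kp] /=.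
  rewrite Fp_eq0; apply/negP => /dvd_small; lia.
have E : \prod_(k <- s) ((k%:Z * a)%:~R : F) =
         \prod_(k <- s) ((-1) ^+ up p (k%:Z * a) * (rho p a k)%:~R).
  apply: eq_bigr => k _.
  by rewrite -Fp_modz (rho_cong _ _ op) Fp_modz intrM rmorphXn rmorphN1.
move: E; rewrite big_split /= prod_sign -/(G p a).
rewrite -(big_map (rho p a) xpredT (fun z => (z%:~R : F))).
rewrite (perm_big _ (rho_perm op ca)) big_map.
under eq_bigr do rewrite intrM.
rewrite big_split /= prod_const size_iota mulrC => /mulIf; apply.
exact: P0.
Qed.

Lemma odd_prime_ne (t : nat) : odd p -> (-1 : F) != 1.
Proof.
move=> op; apply/negP => /eqP E.
have : ((2%:Z)%:~R : F) == 0 by rewrite nat_intr mulr2n -{1}E addNr.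
rewrite Fp_eq0 => /(dvdn_leq (isT : (0 < 2)%N)) p2.
have p1 := prime_gt1 pp.
have : p = 2%N by lia.
by move=> e; rewrite e in op.
Qed.

Lemma legendre_G (a : int) : odd p -> coprimez a p ->
  legendre a p = (-1) ^+ G p a.
Proof.
move=> op ca; have hp := n_half op; have p1 := prime_gt1 pp.
have ndiv : ~~ (p%:Z %| a)%Z.
  apply/negP => d; have : (p%:Z %| 1 * a)%Z by rewrite mul1r.
  rewrite Gauss_dvdzl; last by rewrite coprimez_sym.
  by rewrite dvdz1 /=; lia.
have A0 : (a%:~R : F) != 0 by rewrite Fp_eq0.
have gA := gauss_Fp op ca.
have m1 := odd_prime_ne 0 op.
have Fer (Y : F) : Y != 0 -> Y ^+ (p./2).*2 = 1.
  move=> Y0; apply: (mulIf Y0); rewrite mul1r -exprSr.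
  have -> : (p./2).*2.+1 = #|F| by rewrite card_Fp //; lia.
  exact: expf_card.
rewrite /legendre (negbTE ndiv) -signr_odd.
case: ifP => [/existsP [y Hy] | /negbT Hn].
- case og : (odd (G p a)) => //.
  have Y2 : ((y : nat)%:R : F) ^+ 2 = a%:~R.
    apply/eqP; rewrite -subr_eq0 -nat_intr -rmorphXn -rmorphB /= Fp_eq0; exact: Hy.
  have Y0 : ((y : nat)%:R : F) != 0 by apply/eqP => Y0; move: A0; rewrite -Y2 Y0 expr0n.
  move: gA; rewrite -signr_odd og -Y2 -exprM mul2n Fer // => E.
  by exfalso; move/eqP: m1; apply; rewrite {2}E expr1.
- case og : (odd (G p a)) => //; exfalso.
  move: gA; rewrite -signr_odd og expr0 => gA.
  pose q : {poly F} := 'X^(p./2) - 1%:P.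
  have q0 : q != 0.
    by rewrite -size_poly_eq0 size_XnsubC //; lia.
  pose rs := (a%:~R : F) :: [seq ((k%:R : F) ^+ 2) | k <- iota 1 p./2].
  have Hk k : k \in iota 1 p./2 -> (k%:R : F) != 0.
    rewrite in_half // => /andP [k0 kp]; rewrite -nat_intr Fp_eq0.
    apply/negP => /dvd_small; lia.
  have roots : all (root q) rs.
    apply/allP => z; rewrite inE => /orP [/eqP -> | /mapP [k Hk' ->]].
      by rewrite /root /q !hornerE gA subrr.
    by rewrite /root /q !hornerE -exprM mul2n Fer ?subrr // Hk.
  have U : uniq rs.
    rewrite /rs /= map_inj_in_uniq ?iota_uniq ?andbT.
      apply/negP => /mapP [k Hk' Ek]; move: Hn => /negP; apply; apply/existsP.
      move: Hk'; rewrite in_half // => /andP [k0 kp].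
      have kp' : (k < p)%N by lia.
      exists (Ordinal kp') => /=; rewrite -Fp_eq0 rmorphB rmorphXn /= nat_intr -Ek subrr //.
    move=> k j Hk' Hj' /eqP; rewrite -subr_eq0 subr_sqr mulf_eq0 => /orP [] /eqP E.
      move: Hk' Hj'; rewrite !in_half // => /andP [k0 kp] /andP [j0 jp].
      have : (((k%:Z - j%:Z))%:~R : F) == 0 by rewrite rmorphB /= !nat_intr E.
      rewrite Fp_eq0 => /dvd_small H; have : k%:Z - j%:Z = 0 by apply: H; lia.
      lia.
    move: Hk' Hj'; rewrite !in_half // => /andP [k0 kp] /andP [j0 jp].
    have : (((k%:Z + j%:Z))%:~R : F) == 0 by rewrite rmorphD /= !nat_intr E.
    rewrite Fp_eq0 => /dvd_small H; have : k%:Z + j%:Z = 0 by apply: H; lia.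
    lia.
  have := max_poly_roots q0 roots U.
  by rewrite /rs /= size_map size_iota size_XnsubC //; lia.
Qed.

End Prime.

Lemma jacobi_G n a : odd n -> coprimez a n -> jacobi a n = (-1) ^+ G n a.
Proof.
elim/ltn_ind: n => n IH on ca.
have n0 := odd_gt0 on.
case: (leqP n 1) => n1.
  have -> : n = 1%N by lia.
  by rewrite /jacobi /G /= big_nil expr0.
have pp := pdiv_prime n1; set p := pdiv n in pp.
have pn : (p %| n)%N := pdiv_dvd n.
set m := (n %/ p)%N.
have en : n = (p * m)%N by rewrite mulnC divnK.
have op : odd p by move: on; rewrite en oddM => /andP [].
have om : odd m by move: on; rewrite en oddM => /andP [].
have p0 := odd_gt0 op; have m0 := odd_gt0 om.
have mn : (m < n)%N by rewrite /m ltn_Pdiv // prime_gt1.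
have cp : coprimez a p by apply: (coprimez_dvdr pn).
have cm : coprimez a m by apply: (@coprimez_dvdr m n); rewrite // en dvdn_mull.
rewrite en jacobiM // (IH m) //.
rewrite /jacobi primes_prime // big_cons big_nil mulr1 logn_prime // eqxx expr1.
rewrite (legendre_G pp) // -[RHS]signr_odd G_dmul -?en // signr_addb !signr_odd //.
Qed.

Lemma cnt_iota n P : odd n -> cnt n P = count P (iota 1 n./2).
Proof.
move=> on; have := odd_double_half n; rewrite on => hn.
rewrite /cnt (_ : n.-1 = n./2 + n./2)%N; last by lia.
rewrite iotaD count_cat.
rewrite (@eq_in_count _ _ P (iota 1 n./2)); last first.
  by move=> k; rewrite mem_iota => /andP [_ ?]; rewrite (_ : (2 * k < n)%N = true) //; lia.
rewrite (@eq_in_count _ _ pred0 (iota (1 + n./2) n./2)); last first.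
  move=> k; rewrite mem_iota => /andP [? _] /=; rewrite (_ : (2 * k < n)%N = false) //; lia.
by rewrite count_pred0 addn0.
Qed.

Lemma q_range (q N s : int) : 0 < N -> q * N = s -> - N < s < 2 * N -> 0 <= q <= 1.
Proof.
move=> N0 E /andP [h1 h2]; apply/andP; split.
  rewrite leNgt; apply/negP => ql; have q1 : q <= -1 by lia.
  have : q * N <= - N by rewrite -mulN1r ler_pM2r.
  lia.
rewrite leNgt; apply/negP => ql; have q1 : 2 <= q by lia.
have : 2 * N <= q * N by rewrite ler_pM2r.
lia.
Qed.

Lemma perk n x k : odd n -> coprimez x n -> coprimez (1 - x) n ->
  (0 < k)%N -> (2 * k < n)%N ->
  ((k%:Z * x) %% n%:Z)%Z + ((k%:Z * (1 - x)) %% n%:Z)%Z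
    = k%:Z + n%:Z * Posz (nat_of_bool (k%:Z < ((k%:Z * x) %% n%:Z)%Z)%R)
  /\ (k%:Z < ((k%:Z * x) %% n%:Z)%Z) = up n (k%:Z * x) || up n (k%:Z * (1 - x)).
Proof.
move=> on cx cy k0 kn; have n0 := odd_gt0 on; have hn := n_half on.
set u := ((k%:Z * x) %% n%:Z)%Z; set v := ((k%:Z * (1 - x)) %% n%:Z)%Z.
have [ul uh] := andP (res_bounds (k%:Z * x) n0).
have [vl vh] := andP (res_bounds (k%:Z * (1 - x)) n0).
have u0 : u != 0 by apply: res_nz => //; lia.
have v0 : v != 0 by apply: res_nz => //; lia.
have hu := @odd_neq2 n u on; have hv := @odd_neq2 n v on.
have Em : ((u + v) %% n%:Z)%Z = k%:Z.
  by rewrite modzDm -mulrDr addrC subrK mulr1 modz_small //; lia.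
have Ed := divz_eq (u + v) n%:Z; rewrite Em in Ed.
set q := ((u + v) %/ n%:Z)%Z in Ed.
have /andP [q0 q1] : 0 <= q <= 1.
  apply: (@q_range q n%:Z (u + v - k%:Z)); [lia | lia | ].
  apply/andP; split; lia.
have [Eq|Eq] : q = 0 \/ q = 1 by lia.
- rewrite Eq mul0r add0r in Ed; rewrite /up -/u -/v.
  have -> : (k%:Z < u) = false by apply/negbTE; rewrite -leNgt; lia.
  have -> : (n%:Z < 2 * u) = false by apply/negbTE; rewrite -leNgt; lia.
  have -> : (n%:Z < 2 * v) = false by apply/negbTE; rewrite -leNgt; lia.
  split => //; lia.
- rewrite Eq mul1r in Ed; rewrite /up -/u -/v.
  have -> : (k%:Z < u) = true by lia.
  split; first lia.
  symmetry; apply/orP; case: (ltrP n%:Z (2 * u)) => H; first by left.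
  right; lia.
Qed.

Lemma count_split (I : Type) (a b : pred I) s :
  (count a s = count (fun k => a k && b k) s + count (fun k => a k && ~~ b k) s)%N.
Proof. by elim: s => //= y s ->; case: (a y); case: (b y) => /=; lia. Qed.

Lemma lt_half n (u : int) : odd n -> (2 * u < n%:Z) = ~~ (n%:Z < 2 * u).
Proof. move=> on; have := @odd_neq2 n u on; rewrite -leNgt; lia. Qed.

Unset Implicit Arguments.

Theorem theorem1p1 (n : nat) (x : int) :
  (0 < n)%N -> odd n -> coprimez (x * (1 - x)) n%:Z ->
  [/\ (-1) ^+ cnt n (fun k => k%:Z < lres (k%:Z * x) n) = jacobi (2 * x * (1 - x)) n,
      (-1) ^+ cnt n (fun k => (n%:Z < 2 * lres (k%:Z * x) n)
                              && (n%:Z < 2 * lres (k%:Z * (1 - x)) n)) = jacobi 2 n,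
      (-1) ^+ cnt n (fun k => (2 * lres (k%:Z * x) n < n%:Z)
                              && (2 * lres (k%:Z * (1 - x)) n < n%:Z))
        = jacobi (2 * x * (x - 1)) n
    & (-1) ^+ cnt n (fun k => (n%:Z < 2 * lres (k%:Z * x) n)
                              && (2 * lres (k%:Z * (1 - x)) n < n%:Z)) = jacobi (2 * x) n].
Proof.
move=> n0 on cop.
have /andP [cx cy] : coprimez x n && coprimez (1 - x) n by rewrite -coprimezMl.
have c2 : coprimez 2 n by rewrite coprimezE /= coprime2n.
have cm1 : coprimez (-1) n by rewrite coprimezE /= coprime1n.
have hn := n_half on.
rewrite !cnt_iota //.
set s := iota 1 n./2.
set A := (fun k : nat => up n (k%:Z * x)).
set B := (fun k : nat => up n (k%:Z * (1 - x))).
have eqC : count (fun k : nat => k%:Z < lres (k%:Z * x) n) s = count (fun k => A k || B k) s.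
  apply: eq_in_count => k; rewrite in_half // => /andP [k0 kn].
  by have [_ ->] := perk on cx cy k0 kn.
set cC := count (fun k => A k || B k) s in eqC.
have key : odd cC = odd (T n) (+) odd (G n x) (+) odd (G n (1 - x)).
  have [W1 E1] := G_sum on cx; have [W2 E2] := G_sum on cy.
  rewrite -/s in E1 E2.
  have E3 : \sum_(k <- s) ((k%:Z * x) %% n%:Z)%Z + \sum_(k <- s) ((k%:Z * (1 - x)) %% n%:Z)%Z
            = (T n)%:Z + n%:Z * cC%:Z.
    rewrite -big_split /= /T Posz_sum /cC count_sum Posz_sum mulr_sumr -big_split /=.
    apply: eq_big_seq => k; rewrite in_half // => /andP [k0 kn].
    by have [E E'] := perk on cx cy k0 kn; rewrite E E'.
  have : (cC + T n + G n x + G n (1 - x))%N%:Z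
         = 2 * ((T n)%:Z + W1 + W2 - (n./2)%:Z * cC%:Z).
    have E4 : n%:Z * cC%:Z = 2 * ((n./2)%:Z * cC%:Z) + cC%:Z by rewrite hn; ring.
    rewrite !PoszD; lia.
  move=> /even_nat; rewrite !oddD.
  by case: (odd cC); case: (odd (T n)); case: (odd (G n x)); case: (odd (G n (1 - x))).
have G2 := G_two on.
have Gm1 := G_m1 on.
have c2x : coprimez (2 * x) n by rewrite coprimezMl c2.
have c2xy : coprimez (2 * x * (1 - x)) n by rewrite coprimezMl c2x.
have GP : odd (G n (2 * x * (1 - x))) = odd (T n) (+) odd (G n x) (+) odd (G n (1 - x)).
  by rewrite G_mul // G_mul // G2.
have AB : odd (count (fun k => A k && B k) s) = odd (T n).
  have := count_predUI A B s; rewrite -/cC => E.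
  have : odd (cC + count (predI A B) s) = odd (G n x + G n (1 - x)) by rewrite E.
  rewrite !oddD key.
  by case: (odd (count (predI A B) s)); case: (odd (T n)); case: (odd (G n x)); case: (odd (G n (1 - x))).
split.
- rewrite eqC (jacobi_G on c2xy) -signr_odd -[RHS]signr_odd key GP //.
- rewrite (jacobi_G on c2) -signr_odd -[RHS]signr_odd G2 -AB //.
- have c3 : coprimez (2 * x * (x - 1)) n.
    rewrite (_ : 2 * x * (x - 1) = -1 * (2 * x * (1 - x))); last by ring.
    by rewrite coprimezMl cm1.
  rewrite (jacobi_G on c3) (_ : 2 * x * (x - 1) = -1 * (2 * x * (1 - x))); last by ring.
  rewrite -signr_odd -[RHS]signr_odd G_mul // Gm1 GP.
  rewrite (@eq_in_count _ _ (predC (fun k => A k || B k))); last first.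
    by move=> k _; rewrite /= /lres !lt_half // negb_or.
  have := count_predC (fun k => A k || B k) s; rewrite -/cC size_iota => E.
  have : odd (cC + count (predC (fun k => A k || B k)) s) = odd n./2 by rewrite E.
  rewrite oddD key.
  by case: (odd (count (predC (fun k => A k || B k)) s)); case: (odd (T n)); case: (odd (G n x)); case: (odd (G n (1 - x))); case: (odd n./2).
- rewrite (jacobi_G on c2x) -signr_odd -[RHS]signr_odd G_mul // G2.
  rewrite (@eq_in_count _ _ (fun k => A k && ~~ B k)); last first.
    by move=> k _; rewrite /= /lres lt_half.
  have := count_split A B s; rewrite -/(G n x) => E.
  have : odd (G n x) = odd (count (fun k => A k && B k) s + count (fun k => A k && ~~ B k) s) by rewrite -E.
  rewrite oddD AB.
  by case: (odd (count (fun k => A k && ~~ B k) s)); case: (odd (T n)); case: (odd (G n x)).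
Qed.
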